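(* In the Biggs-Smith graph $\mathrm{BS}$, every path of length at most $7$ contained in the $a$-cycle is a geodesic (a shortest path between its endpoints).
   Context: The Biggs-Smith graph $\mathrm{BS}$ is the cubic graph on the $102$ vertices $ia,ib,ic,id,ie,if$ for $i\in\{1,\dots,17\}$ (indices taken modulo 17, with $0$ written as $17$), whose edges are: $ie\,ia$, $ie\,ib$, $ie\,if$, $if\,ic$, $if\,id$ for each $i$; and $ia\,(i+1)a$, $ib\,(i+4)b$, $ic\,(i+2)c$, $id\,(i+8)d$ for each $i$. The $a$-cycle is the $17$-cycle $1a,2a,\dots,17a,1a$ formed by the edges $ia\,(i+1)a$. *)

(* Defs.v *)
From mathcomp Require Import all_boot.
Set Implicit Arguments. Unset Strict Implicit. Unset Printing Implicit Defensive.

(* Vertices of the Biggs-Smith graph: pairs (i, l) with i : 'I_17 the index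
   (index 17 of the paper is represented by 0; all index arithmetic is mod 17)
   and l : 'I_6 the letter, encoded a=0, b=1, c=2, d=3, e=4, f=5. *)
Definition bs_vertex := ('I_17 * 'I_6)%type.

Definition la := 0. Definition lb := 1. Definition lc := 2.
Definition ld := 3. Definition le := 4. Definition lf := 5.

(* One orientation of each edge listed in the paper. *)
Definition bs_arc (u v : bs_vertex) : bool :=
  let: (i, l) := u in let: (j, m) := v in
  [|| (l == le :> nat) && (m == la :> nat) && (i == j),
      (l == le :> nat) && (m == lb :> nat) && (i == j),
      (l == le :> nat) && (m == lf :> nat) && (i == j),
      (l == lf :> nat) && (m == lc :> nat) && (i == j),
      (l == lf :> nat) && (m == ld :> nat) && (i == j),
      (l == la :> nat) && (m == la :> nat) && (j == (i + 1) %% 17 :> nat),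
      (l == lb :> nat) && (m == lb :> nat) && (j == (i + 4) %% 17 :> nat),
      (l == lc :> nat) && (m == lc :> nat) && (j == (i + 2) %% 17 :> nat)
    | (l == ld :> nat) && (m == ld :> nat) && (j == (i + 8) %% 17 :> nat)].

Definition bs_adj (u v : bs_vertex) : bool := bs_arc u v || bs_arc v u.

Definition acycle_adj (u v : bs_vertex) : bool :=
  let: (i, l) := u in let: (j, m) := v in
  (l == la :> nat) && (m == la :> nat) &&
  ((j == (i + 1) %% 17 :> nat) || (i == (j + 1) %% 17 :> nat)).

Definition bs_geodesic (x : bs_vertex) (p : seq bs_vertex) : Prop :=
  path bs_adj x p /\
  forall q : seq bs_vertex, path bs_adj x q -> last x q = last x p ->
    size p <= size q.

(* Main.v *)
Require Import Defs.
From mathcomp Require Import all_boot.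

Definition code (v : bs_vertex) : nat := v.2 * 17 + v.1.
Definition decode (k : nat) : bs_vertex :=
  (Ordinal (ltn_pmod k (isT : 0 < 17)), Ordinal (ltn_pmod (k %/ 17) (isT : 0 < 6))).

Lemma decode_code v : decode (code v) = v.
Proof.
case: v => i l; rewrite /decode /code /=.
have hi := ltn_ord i; have hl := ltn_ord l.
congr pair; apply: val_inj => /=.
  by rewrite modnMDl modn_small.
by rewrite divnMDl // divn_small // addn0 modn_small.
Qed.

Lemma code_lt v : code v < 102.
Proof.
case: v => i l; rewrite /code /=.
have hi := ltn_ord i; have hl := ltn_ord l.
have : l * 17 <= 5 * 17 by rewrite leq_mul2r /= -ltnS.
move=> h; apply: (@leq_trans (5 * 17 + 17)); last by [].
by rewrite -addnS leq_add.
Qed.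

Lemma code_inj : injective code.
Proof. exact: can_inj decode_code. Qed.

Definition nbtab : seq (seq nat) := Eval vm_compute in
  mkseq (fun k => [seq j <- iota 0 102 | bs_adj (decode k) (decode j)]) 102.
Definition nbA : seq (seq nat) := Eval vm_compute in
  mkseq (fun k => [seq j <- iota 0 102 | acycle_adj (decode k) (decode j)]) 102.

Lemma nbtab_ok : all (fun k => all (fun j =>
  bs_adj (decode k) (decode j) ==> (j \in nth [::] nbtab k)) (iota 0 102)) (iota 0 102).
Proof. vm_compute. reflexivity. Qed.

Lemma nbA_ok : all (fun k => all (fun j =>
  acycle_adj (decode k) (decode j) ==> (j \in nth [::] nbA k) && bs_adj (decode k) (decode j))
  (iota 0 102)) (iota 0 102).
Proof. vm_compute. reflexivity. Qed.

Lemma adj_code u v : bs_adj u v -> code v \in nth [::] nbtab (code u).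
Proof.
move=> h; have /allP /(_ (code u)) := nbtab_ok.
rewrite mem_iota add0n code_lt => /(_ isT) /allP /(_ (code v)).
by rewrite mem_iota add0n code_lt !decode_code h => /(_ isT).
Qed.

Lemma acyc_code u v : acycle_adj u v -> (code v \in nth [::] nbA (code u)) && bs_adj u v.
Proof.
move=> h; have /allP /(_ (code u)) := nbA_ok.
rewrite mem_iota add0n code_lt => /(_ isT) /allP /(_ (code v)).
by rewrite mem_iota add0n code_lt !decode_code h => /(_ isT).
Qed.

Definition relax (d : seq nat) : seq nat :=
  mkseq (fun k => foldl minn (nth 0 d k) [seq (nth 0 d j).+1 | j <- nth [::] nbtab k]) 102.

Definition dtab : seq (seq nat) := Eval vm_compute in
  mkseq (fun x => iter 10 relax (mkseq (fun k => if k == x then 0 else 200) 102)) 102.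

Definition D x k := nth 0 (nth [::] dtab x) k.

Lemma dist_ok : all (fun x => (D x x == 0) && all (fun k => all (fun j =>
  D x j <= (D x k).+1) (nth [::] nbtab k)) (iota 0 102)) (iota 0 102).
Proof. vm_compute. reflexivity. Qed.

Fixpoint allpathsN n (x : nat) : seq (seq nat) :=
  if n is n'.+1 then
    [seq y :: q | y <- nth [::] nbA x, q <- allpathsN n' y]
  else [:: [::]].

Lemma paths_ok : all (fun x => all (fun n => all (fun p =>
  uniq (x :: p) ==> (n <= D x (last x p))) (allpathsN n x)) (iota 0 8)) (iota 0 102).
Proof. vm_compute. reflexivity. Qed.

Lemma allpaths_mem x p : path acycle_adj x p -> map code p \in allpathsN (size p) (code x).
Proof.
elim: p x => [|y q IH] x /=; first by rewrite inE.
move=> /andP [hxy hq].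
apply/allpairsPdep; exists (code y), (map code q); split => //; last exact: IH.
by case/andP: (acyc_code _ _ hxy).
Qed.

Lemma walk_bound x u q : x < 102 -> path bs_adj u q ->
  D x (code (last u q)) <= D x (code u) + size q.
Proof.
move=> hx.
have := dist_ok => /allP /(_ x); rewrite mem_iota add0n hx => /(_ isT) /andP [_ /allP H].
elim: q u => [|w q IH] u /=; first by rewrite addn0.
move=> /andP [huw hq].
have := IH w hq.
have := H (code u); rewrite mem_iota add0n code_lt => /(_ isT) /allP /(_ (code w) (adj_code _ _ huw)).
move=> h1 h2.
rewrite addnS -addSn; apply: (leq_trans h2); by rewrite leq_add2r.
Qed.

Theorem lemma2p5 (x : bs_vertex) (p : seq bs_vertex) :
  path acycle_adj x p -> uniq (x :: p) -> size p <= 7 ->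
  bs_geodesic x p.
Proof.
move=> hp hu hs; split.
  apply: sub_path hp => u v huv.
  by case/andP: (acyc_code _ _ huv).
move=> q hq hl.
have := paths_ok => /allP /(_ (code x)); rewrite mem_iota add0n code_lt => /(_ isT).
move=> /allP /(_ (size p)); rewrite mem_iota add0n ltnS hs => /(_ isT).
move=> /allP /(_ _ (allpaths_mem _ _ hp)).
have hu' : uniq (code x :: map code p) by rewrite -(map_cons code) (map_inj_uniq code_inj).
rewrite hu' /= (last_map code) => h.
apply: (leq_trans h); rewrite -hl.
have := dist_ok => /allP /(_ (code x)); rewrite mem_iota add0n code_lt => /(_ isT) /andP [H0 _].
have := walk_bound _ _ _ (code_lt x) hq; by rewrite (eqP H0).
Qed.
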